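(* Consider the problem of steering $\dot x=Ax+u b$, $|u(t)|\le1$, from $(0,0,0)$ to $(\gamma,0,\gamma)$ in minimum time, where $$A=\begin{pmatrix}0&1&0\\-1&0&1\\0&0&0\end{pmatrix},\qquad b=(0,0,1)^T,\qquad \gamma>0.$$ (i) If $2(\rho-1)\pi<\gamma<2\rho\pi$ for some integer $\rho\ge1$, the unique optimal control has exactly $2\rho$ switchings and is $$u(t)=(-1)^{j-1},\quad t_{j-1}<t<t_j,\quad j=1,\dots,2\rho+1,$$ with $t_0=0$, where the interval lengths $\tau_j=t_j-t_{j-1}$ satisfy: $\tau_1=\tau_{2\rho+1}=\tau$, where $\tau\in(0,\pi)$ is the unique solution in $(0,\pi)$ of $$\frac{2\tau+2(\rho-1)\pi-\gamma}{2\rho-1}=2\tan^{-1}\!\Big(\frac{\sin\tau}{2\rho-\cos\tau}\Big)$$ (with $\tan^{-1}$ taking values in $(-\pi/2,\pi/2)$); $$\tau_{2k}=\frac{2\tau+2(\rho-1)\pi-\gamma}{2\rho-1},\quad k=1,\dots,\rho;\qquad \tau_{2k+1}=2\pi-\tau_{2k+2}=\frac{2\rho\pi-2\tau+\gamma}{2\rho-1},\quad k=1,\dots,\rho-1.$$ The minimum transfer time is $$t_{2\rho+1}=\frac{4\rho[\tau+(\rho-1)\pi]-\gamma}{2\rho-1}.$$ (ii) If $\gamma=2\rho\pi$ for some integer $\rho\ge1$, the optimal control is $u(t)\equiv1$ and the minimum time is $2\rho\pi$.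
   Context: Controls are measurable functions with values in $[-1,1]$; the terminal time is free. *)

(* Defs.v *)
From Stdlib Require Import Reals Lra Lia Arith.
Open Scope R_scope.

(* System x' = A x + u b with A = [[0,1,0],[-1,0,1],[0,0,0]], b = (0,0,1)^T:
     x1' = x2,  x2' = -x1 + x3,  x3' = u,  |u| <= 1, u measurable.
   Since no Lebesgue theory is available, an admissible (Caratheodory)
   trajectory starting at (0,0,0) is encoded as: x3 is 1-Lipschitz
   (equivalently x3 is absolutely continuous with x3' = u a.e., |u| <= 1,
   u measurable), and x1, x2 satisfy their (continuous right-hand side)
   equations classically.  Trajectories are defined on all of R (any control
   on [0,T] extends, e.g. by u = 0). *)
Definition traj (x1 x2 x3 : R -> R) : Prop :=
  x1 0 = 0 /\ x2 0 = 0 /\ x3 0 = 0 /\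
  (forall s t : R, Rabs (x3 t - x3 s) <= Rabs (t - s)) /\
  (forall t : R, derivable_pt_lim x1 t (x2 t)) /\
  (forall t : R, derivable_pt_lim x2 t (- x1 t + x3 t)).

Definition reaches (g T : R) (x1 x2 x3 : R -> R) : Prop :=
  0 <= T /\ x1 T = g /\ x2 T = 0 /\ x3 T = g.

Definition control_on (x3 : R -> R) (a b c : R) : Prop :=
  forall t : R, a < t < b -> derivable_pt_lim x3 t c.

Definition tau_even (rho : nat) (g tau : R) : R :=
  (2 * tau + 2 * (INR rho - 1) * PI - g) / (2 * INR rho - 1).
Definition tau_odd (rho : nat) (g tau : R) : R :=
  (2 * INR rho * PI - 2 * tau + g) / (2 * INR rho - 1).

Definition tauj (rho : nat) (g tau : R) (j : nat) : R :=
  if orb (Nat.eqb j 1) (Nat.eqb j (2 * rho + 1)) then tau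
  else if Nat.even j then tau_even rho g tau else tau_odd rho g tau.

Fixpoint tsw (rho : nat) (g tau : R) (j : nat) : R :=
  match j with
  | O => 0
  | S k => tsw rho g tau k + tauj rho g tau (S k)
  end.

Definition tau_eq (rho : nat) (g tau : R) : Prop :=
  tau_even rho g tau = 2 * atan (sin tau / (2 * INR rho - cos tau)).

(* Main.v *)
Require Import Defs.
From Stdlib Require Import Reals Lra Lia Arith.
From Coquelicot Require Import Coquelicot.
Open Scope R_scope.

Lemma deriv_loc (f g : R -> R) (c l d : R) :
  0 < d -> (forall t, Rabs (t - c) < d -> f t = g t) ->
  derivable_pt_lim g c l -> derivable_pt_lim f c l.
Proof.
  intros Hd Heq Hg eps Heps.
  destruct (Hg eps Heps) as [d1 Hd1].
  assert (Hm : 0 < Rmin d d1) by (apply Rmin_pos; [lra| apply (cond_pos d1)]).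
  exists (mkposreal _ Hm). intros h Hh0 Hh. simpl in Hh.
  rewrite (Heq (c + h)), (Heq c).
  - apply Hd1; auto. apply Rlt_le_trans with (1:=Hh), Rmin_r.
  - rewrite Rminus_diag, Rabs_R0; lra.
  - replace (c + h - c) with h by ring. apply Rlt_le_trans with (1:=Hh), Rmin_l.
Qed.

Lemma deriv_glue (f g1 g2 : R -> R) (c l : R) :
  (forall t, t <= c -> f t = g1 t) -> (forall t, c <= t -> f t = g2 t) ->
  derivable_pt_lim g1 c l -> derivable_pt_lim g2 c l ->
  derivable_pt_lim f c l.
Proof.
  intros H1 H2 D1 D2 eps Heps.
  destruct (D1 eps Heps) as [d1 Hd1]. destruct (D2 eps Heps) as [d2 Hd2].
  assert (Hm : 0 < Rmin d1 d2) by (apply Rmin_pos; apply cond_pos).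
  exists (mkposreal _ Hm). intros h Hh0 Hh. simpl in Hh.
  destruct (Rle_dec h 0) as [Hn|Hp].
  - rewrite (H1 (c+h)) by lra. rewrite (H1 c) by lra.
    apply Hd1; auto. apply Rlt_le_trans with (1:=Hh), Rmin_l.
  - rewrite (H2 (c+h)) by lra. rewrite (H2 c) by lra.
    apply Hd2; auto. apply Rlt_le_trans with (1:=Hh), Rmin_r.
Qed.

Lemma deriv_lin (f : R -> R) (c u d : R) :
  0 < d -> (forall t, Rabs (t - c) < d -> f t = f c + u * (t - c)) ->
  derivable_pt_lim f c u.
Proof.
  intros Hd Heq. apply deriv_loc with (g := fun t => f c + u * (t - c)) (d := d); auto.
  apply is_derive_Reals. auto_derive; auto. ring.
Qed.

(* ---------- ramp responses ---------- *)
Definition ramp (s : R) : R := if Rle_dec s 0 then 0 else s.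
Definition Rr (s : R) : R := if Rle_dec s 0 then 0 else s - sin s.
Definition Rp (s : R) : R := if Rle_dec s 0 then 0 else 1 - cos s.

Lemma ramp_neg s : s <= 0 -> ramp s = 0.
Proof. intros; unfold ramp; destruct Rle_dec; lra. Qed.
Lemma Rr_neg s : s <= 0 -> Rr s = 0.
Proof. intros; unfold Rr; destruct Rle_dec; lra. Qed.
Lemma Rp_neg s : s <= 0 -> Rp s = 0.
Proof. intros; unfold Rp; destruct Rle_dec; lra. Qed.
Lemma ramp_pos s : 0 <= s -> ramp s = s.
Proof. intros; unfold ramp; destruct Rle_dec; lra. Qed.
Lemma Rr_pos s : 0 <= s -> Rr s = s - sin s.
Proof. intros; unfold Rr; destruct Rle_dec; auto. replace s with 0 by lra. rewrite sin_0; ring. Qed.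
Lemma Rp_pos s : 0 <= s -> Rp s = 1 - cos s.
Proof. intros; unfold Rp; destruct Rle_dec; auto. replace s with 0 by lra. rewrite cos_0; ring. Qed.

Lemma Rr_deriv s : derivable_pt_lim Rr s (Rp s).
Proof.
  destruct (Rtotal_order s 0) as [Hs|[Hs|Hs]].
  - rewrite Rp_neg by lra. apply deriv_loc with (g := fun _ => 0) (d := -s); [lra| |].
    + intros t Ht. apply Rr_neg. apply Rabs_def2 in Ht. lra.
    + apply derivable_pt_lim_const.
  - subst. rewrite Rp_neg by lra.
    apply deriv_glue with (g1 := fun _ => 0) (g2 := fun s => s - sin s).
    + apply Rr_neg. + apply Rr_pos. + apply derivable_pt_lim_const.
    + apply is_derive_Reals. auto_derive; auto. rewrite cos_0; ring.
  - rewrite Rp_pos by lra. apply deriv_loc with (g := fun s => s - sin s) (d := s); [lra| |].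
    + intros t Ht. apply Rr_pos. apply Rabs_def2 in Ht. lra.
    + apply is_derive_Reals. auto_derive; auto. ring.
Qed.

Lemma Rp_deriv s : derivable_pt_lim Rp s (ramp s - Rr s).
Proof.
  destruct (Rtotal_order s 0) as [Hs|[Hs|Hs]].
  - rewrite ramp_neg, Rr_neg by lra. replace (0-0) with 0 by ring.
    apply deriv_loc with (g := fun _ => 0) (d := -s); [lra| |].
    + intros t Ht. apply Rp_neg. apply Rabs_def2 in Ht. lra.
    + apply derivable_pt_lim_const.
  - subst. rewrite ramp_neg, Rr_neg by lra. replace (0-0) with 0 by ring.
    apply deriv_glue with (g1 := fun _ => 0) (g2 := fun s => 1 - cos s).
    + apply Rp_neg. + apply Rp_pos. + apply derivable_pt_lim_const.
    + apply is_derive_Reals. auto_derive; auto. rewrite sin_0; ring.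
  - rewrite ramp_pos, Rr_pos by lra. apply deriv_loc with (g := fun s => 1 - cos s) (d := s); [lra| |].
    + intros t Ht. apply Rp_pos. apply Rabs_def2 in Ht. lra.
    + apply is_derive_Reals. auto_derive; auto. ring.
Qed.

Lemma deriv_shift (f : R -> R) (c t l : R) :
  derivable_pt_lim f (t - c) l -> derivable_pt_lim (fun s => f (s - c)) t l.
Proof.
  intros H. apply is_derive_Reals in H. apply is_derive_Reals.
  apply (is_derive_comp f (fun s => s - c) t l 1) in H.
  - replace l with (1 * l) by ring. exact H.
  - auto_derive; auto; ring.
Qed.

Lemma step_mono (f : R -> R) (a b C : R) :
  a <= b -> 0 <= C ->
  (forall t h, a <= t -> 0 < h -> t + h <= b -> f (t + h) - f t <= C * h * h) ->
  f b <= f a.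
Proof.
  intros Hab HC Hs.
  destruct (Req_dec a b) as [E|Hne]; [subst; lra|].
  destruct (Rle_or_lt (f b) (f a)) as [Hok|Hbad]; auto. exfalso.
  set (dl := f b - f a).
  assert (Hdl : 0 < dl) by (unfold dl; lra).
  assert (HE : 0 < dl / (C * (b - a) * (b - a) + 1)).
  { apply Rdiv_lt_0_compat; auto. assert (0 <= C * (b-a) * (b-a)) by (apply Rmult_le_pos; [apply Rmult_le_pos|]; lra). lra. }
  destruct (archimed_cor1 _ HE) as [n [Hn Hn0]].
  assert (HnR : 0 < INR n) by (apply lt_0_INR; lia).
  set (h := (b - a) / INR n).
  assert (Hh : 0 < h) by (unfold h; apply Rdiv_lt_0_compat; lra).
  assert (Hind : forall k, (k <= n)%nat -> f (a + INR k * h) - f a <= INR k * (C * h * h)).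
  { induction k as [|k IH]; intros Hk.
    - simpl. rewrite Rmult_0_l, Rplus_0_r. lra.
    - assert (Hk' : INR (S k) <= INR n) by (apply le_INR; lia).
      rewrite S_INR in *.
      specialize (IH ltac:(lia)).
      assert (Hkk : 0 <= INR k) by apply pos_INR.
      assert (Hstep := Hs (a + INR k * h) h ltac:(nra) Hh).
      assert (Hle : a + INR k * h + h <= b).
      { unfold h. replace (a + INR k * ((b - a) / INR n) + (b - a) / INR n) with
          (a + (INR k + 1) * (b - a) / INR n) by (field; lra).
        apply Rle_trans with (a + INR n * (b-a) / INR n).
        - assert ((INR k + 1) * (b - a) / INR n <= INR n * (b - a) / INR n); [|lra].
          apply Rmult_le_compat_r; [apply Rlt_le, Rinv_0_lt_compat; lra|]. nra.
        - right. field. lra. }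
      specialize (Hstep Hle).
      replace (a + (INR k + 1) * h) with (a + INR k * h + h) by ring. lra. }
  specialize (Hind n (le_n n)).
  replace (a + INR n * h) with b in Hind by (unfold h; field; lra).
  fold dl in Hind.
  assert (Heq : INR n * (C * h * h) = C * (b - a) * (b - a) / INR n) by (unfold h; field; lra).
  rewrite Heq in Hind.
  set (K := C * (b - a) * (b - a)) in *.
  assert (HK : 0 <= K) by (unfold K; apply Rmult_le_pos; [apply Rmult_le_pos|]; lra).
  assert (H1 : (K + 1) * / INR n < dl).
  { apply Rmult_lt_compat_l with (r := K + 1) in Hn; [|lra].
    replace ((K + 1) * (dl / (K + 1))) with dl in Hn by (field; lra). exact Hn. }
  assert (H2 : K / INR n <= (K+1) * / INR n).
  { unfold Rdiv. apply Rmult_le_compat_r; [apply Rlt_le, Rinv_0_lt_compat; lra| lra]. }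
  lra.
Qed.

Lemma GM (Q s P2 y3 : R -> R) (a b K L : R) :
  a <= b -> 0 <= K -> 0 <= L ->
  (forall t, a <= t <= b -> derivable_pt_lim Q t (P2 t * y3 t)) ->
  (forall t, a <= t <= b -> derivable_pt_lim s t (- P2 t)) ->
  (forall t, a <= t <= b -> Rabs (P2 t) <= K) ->
  (forall t t', a <= t <= b -> a <= t' <= b -> Rabs (y3 t' - y3 t) <= L * Rabs (t' - t)) ->
  (forall t h, a <= t -> 0 < h -> t + h <= b -> s t * (y3 (t + h) - y3 t) <= 0) ->
  Q b + s b * y3 b <= Q a + s a * y3 a.
Proof.
  intros Hab HK HL HQ Hs HP Hy Hstep.
  apply (step_mono (fun t => Q t + s t * y3 t) a b (K * L)); auto.
  { apply Rmult_le_pos; auto. }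
  intros t h Ht Hh Hth.
  set (phi := fun r => Q r + s r * y3 (t + h)).
  assert (Hphi : forall c, t <= c <= t + h ->
            derivable_pt_lim phi c (P2 c * y3 c + (- P2 c) * y3 (t + h))).
  { intros c Hc. unfold phi. apply derivable_pt_lim_plus.
    - apply HQ; lra.
    - apply (derivable_pt_lim_scal_right s c (- P2 c) (y3 (t+h))). apply Hs; lra. }
  destruct (MVT_cor2 phi _ t (t + h) ltac:(lra) Hphi) as [c [Hc Hcin]].
  unfold phi in Hc.
  assert (Hb : Rabs (P2 c * (y3 c - y3 (t + h))) <= K * (L * h)).
  { rewrite Rabs_mult. apply Rmult_le_compat; try apply Rabs_pos.
    - apply HP; lra.
    - replace (y3 c - y3 (t+h)) with (- (y3 (t+h) - y3 c)) by ring. rewrite Rabs_Ropp.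
      apply Rle_trans with (L * Rabs (t + h - c)).
      + apply Hy; lra.
      + apply Rmult_le_compat_l; auto. rewrite Rabs_right by lra. lra. }
  assert (Hx : P2 c * y3 c + - P2 c * y3 (t + h) = P2 c * (y3 c - y3 (t + h))) by ring.
  rewrite Hx in Hc.
  apply Rabs_le_between in Hb.
  assert (HS := Hstep t h Ht Hh Hth).
  replace (t + h - t) with h in Hc by ring.
  assert (P2 c * (y3 c - y3 (t + h)) * h <= K * (L * h) * h) by (apply Rmult_le_compat_r; lra).
  nra.
Qed.

Lemma cos_per_sub x k : cos (x - 2 * INR k * PI) = cos x.
Proof. rewrite <- (cos_period (x - 2 * INR k * PI) k). f_equal; ring. Qed.
Lemma sin_per_sub x k : sin (x - 2 * INR k * PI) = sin x.
Proof. rewrite <- (sin_period (x - 2 * INR k * PI) k). f_equal; ring. Qed.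

Lemma cos_2PI_sub v : cos (2 * PI - v) = cos v.
Proof. rewrite <- (cos_neg v). rewrite <- (cos_period (- v) 1). f_equal. simpl. ring. Qed.

Lemma cosA a v : 0 < a < PI -> a <= v <= 2 * PI - a -> cos v <= cos a.
Proof.
  intros Ha Hv. destruct (Rle_or_lt v PI) as [H|H].
  - destruct (Req_dec a v) as [E|E]; [subst; lra|].
    left. apply cos_decreasing_1; lra.
  - rewrite <- cos_2PI_sub.
    destruct (Req_dec a (2*PI - v)) as [E|E]; [rewrite <- E; lra|].
    left. apply cos_decreasing_1; lra.
Qed.
Lemma cosA' a v : 0 < a < PI -> a < v < 2 * PI - a -> cos v < cos a.
Proof.
  intros Ha Hv. destruct (Rle_or_lt v PI) as [H|H].
  - apply cos_decreasing_1; lra.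
  - rewrite <- cos_2PI_sub. apply cos_decreasing_1; lra.
Qed.
Lemma cosB a w : 0 < a < PI -> Rabs w <= a -> cos a <= cos w.
Proof.
  intros Ha Hw. replace (cos w) with (cos (Rabs w)).
  2:{ unfold Rabs; destruct Rcase_abs; [apply cos_neg|reflexivity]. }
  destruct (Req_dec (Rabs w) a) as [E|E]; [rewrite E; lra|].
  assert (0 <= Rabs w) by apply Rabs_pos.
  left. apply cos_decreasing_1; lra.
Qed.
Lemma cosB' a w : 0 < a < PI -> Rabs w < a -> cos a < cos w.
Proof.
  intros Ha Hw. replace (cos w) with (cos (Rabs w)).
  2:{ unfold Rabs; destruct Rcase_abs; [apply cos_neg|reflexivity]. }
  assert (0 <= Rabs w) by apply Rabs_pos.
  apply cos_decreasing_1; lra.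
Qed.

Lemma cos_lip x y : Rabs (cos x - cos y) <= Rabs (x - y).
Proof.
  destruct (Rtotal_order y x) as [H|[H|H]].
  - destruct (MVT_cor2 cos (fun t => - sin t) y x H) as [c [Hc _]].
    + intros; apply derivable_pt_lim_cos.
    + rewrite Hc, Rabs_mult. rewrite <- (Rmult_1_l (Rabs (x - y))) at 2.
      apply Rmult_le_compat_r; [apply Rabs_pos|]. rewrite Rabs_Ropp.
      apply Rabs_le. apply SIN_bound.
  - subst. rewrite !Rminus_diag, Rabs_R0. lra.
  - destruct (MVT_cor2 cos (fun t => - sin t) x y H) as [c [Hc _]].
    + intros; apply derivable_pt_lim_cos.
    + rewrite <- Rabs_Ropp. replace (- (cos x - cos y)) with (cos y - cos x) by ring.
      rewrite Hc, Rabs_mult. rewrite <- Rabs_Ropp with (x := x - y).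
      replace (- (x - y)) with (y - x) by ring.
      rewrite <- (Rmult_1_l (Rabs (y - x))) at 2.
      apply Rmult_le_compat_r; [apply Rabs_pos|]. rewrite Rabs_Ropp.
      apply Rabs_le. apply SIN_bound.
Qed.

(* ---------- superposition of ramp responses ---------- *)
Section Sup.
Variable ts : nat -> R.
Hypothesis ts0 : ts 0%nat = 0.
Hypothesis tsS : forall k, ts k <= ts (S k).

Fixpoint S3 (n : nat) (t : R) : R :=
  match n with O => ramp t | S k => S3 k t + 2 * (-1) ^ (S k) * ramp (t - ts (S k)) end.
Fixpoint S1 (n : nat) (t : R) : R :=
  match n with O => Rr t | S k => S1 k t + 2 * (-1) ^ (S k) * Rr (t - ts (S k)) end.
Fixpoint S2 (n : nat) (t : R) : R :=
  match n with O => Rp t | S k => S2 k t + 2 * (-1) ^ (S k) * Rp (t - ts (S k)) end.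
Fixpoint Lin (n : nat) (t : R) : R :=
  match n with O => t | S k => Lin k t + 2 * (-1) ^ (S k) * (t - ts (S k)) end.
Fixpoint Ssin (n : nat) (t : R) : R :=
  match n with O => sin t | S k => Ssin k t + 2 * (-1) ^ (S k) * sin (t - ts (S k)) end.
Fixpoint Scos (n : nat) (t : R) : R :=
  match n with O => cos t | S k => Scos k t + 2 * (-1) ^ (S k) * cos (t - ts (S k)) end.

Lemma ts_mono k k' : (k <= k')%nat -> ts k <= ts k'.
Proof.
  induction 1; [lra|]. apply Rle_trans with (ts m); auto.
Qed.
Lemma ts_nonneg k : 0 <= ts k.
Proof. rewrite <- ts0. apply ts_mono. lia. Qed.

Lemma S1_deriv n t : derivable_pt_lim (S1 n) t (S2 n t).
Proof.
  induction n; simpl.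
  - apply Rr_deriv.
  - apply derivable_pt_lim_plus; auto.
    apply derivable_pt_lim_scal. apply deriv_shift. apply Rr_deriv.
Qed.
Lemma S2_deriv n t : derivable_pt_lim (S2 n) t (- S1 n t + S3 n t).
Proof.
  induction n; simpl.
  - replace (- Rr t + ramp t) with (ramp t - Rr t) by ring. apply Rp_deriv.
  - replace (- (S1 n t + 2 * (-1 * (-1) ^ n) * Rr (t - ts (S n))) +
      (S3 n t + 2 * (-1 * (-1) ^ n) * ramp (t - ts (S n))))
      with ((- S1 n t + S3 n t) + 2 * (-1 * (-1) ^ n) * (ramp (t - ts (S n)) - Rr (t - ts (S n))))
      by ring.
    apply derivable_pt_lim_plus; auto.
    apply derivable_pt_lim_scal. apply deriv_shift. apply Rp_deriv.
Qed.

Lemma S_zero n : S1 n 0 = 0 /\ S2 n 0 = 0 /\ S3 n 0 = 0.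
Proof.
  induction n as [|n IH]; simpl.
  - rewrite Rr_neg, Rp_neg, ramp_neg; lra.
  - destruct IH as [A [B C]]. rewrite A, B, C.
    assert (0 <= ts (S n)) by apply ts_nonneg.
    rewrite Rr_neg, Rp_neg, ramp_neg by lra. lra.
Qed.

Lemma S3_Z n m t : (m <= n)%nat -> t <= ts (S m) -> S3 n t = S3 m t.
Proof.
  induction 1 as [|n Hmn IH]; intros Ht; auto.
  simpl. rewrite IH by auto. rewrite ramp_neg. ring.
  assert (ts (S m) <= ts (S n)) by (apply ts_mono; lia). lra.
Qed.

Lemma S3_E n t : ts n <= t -> S3 n t = S3 n (ts n) + (-1) ^ n * (t - ts n).
Proof.
  revert t. induction n as [|n IH]; intros t Ht; simpl.
  - rewrite ts0 in *. rewrite !ramp_pos by lra. ring.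
  - assert (ts n <= ts (S n)) by apply tsS.
    rewrite (IH t) by lra. rewrite (IH (ts (S n))) by lra.
    rewrite ramp_pos by lra. rewrite Rminus_diag, ramp_pos by lra. ring.
Qed.

Lemma lip_ext (g : R -> R) (c e : R) :
  (forall s t, s <= c -> t <= c -> Rabs (g t - g s) <= Rabs (t - s)) ->
  (forall t, c <= t -> g t = g c + e * (t - c)) -> Rabs e <= 1 ->
  forall s t, Rabs (g t - g s) <= Rabs (t - s).
Proof.
  intros H1 H2 He.
  assert (Hlin : forall s t, c <= s -> c <= t -> Rabs (g t - g s) <= Rabs (t - s)).
  { intros s t Hs Ht. rewrite (H2 s), (H2 t) by auto.
    replace (g c + e * (t - c) - (g c + e * (s - c))) with (e * (t - s)) by ring.
    rewrite Rabs_mult. rewrite <- (Rmult_1_l (Rabs (t - s))) at 2.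
    apply Rmult_le_compat_r; auto. apply Rabs_pos. }
  assert (Hmix : forall s t, s <= c -> c <= t -> Rabs (g t - g s) <= Rabs (t - s)).
  { intros s t Hs Ht.
    replace (g t - g s) with ((g t - g c) + (g c - g s)) by ring.
    eapply Rle_trans; [apply Rabs_triang|].
    assert (A := Hlin c t ltac:(lra) Ht). assert (B := H1 s c Hs ltac:(lra)).
    rewrite (Rabs_right (t - c)) in A by lra. rewrite (Rabs_right (c - s)) in B by lra.
    rewrite (Rabs_right (t - s)) by lra. lra. }
  intros s t. destruct (Rle_or_lt s c); destruct (Rle_or_lt t c).
  - auto.
  - apply Hmix; lra.
  - rewrite <- Rabs_Ropp, (Rabs_minus_sym t s).
    replace (- (g t - g s)) with (g s - g t) by ring. apply Hmix; lra.
  - apply Hlin; lra.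
Qed.

Lemma pow_m1_abs n : Rabs ((-1) ^ n) = 1.
Proof. induction n; simpl; [apply Rabs_R1| rewrite Rabs_mult, IHn, Rabs_left by lra; lra]. Qed.

Lemma S3_lip n s t : Rabs (S3 n t - S3 n s) <= Rabs (t - s).
Proof.
  revert s t. induction n as [|n IH].
  - apply lip_ext with (c := 0) (e := 1).
    + intros s t Hs Ht. rewrite !ramp_neg by lra. rewrite Rminus_diag, Rabs_R0. apply Rabs_pos.
    + intros t Ht. simpl. rewrite !ramp_pos by lra. ring.
    + rewrite Rabs_R1; lra.
  - apply lip_ext with (c := ts (S n)) (e := (-1) ^ (S n)).
    + intros s t Hs Ht. rewrite (S3_Z (S n) n t), (S3_Z (S n) n s) by (auto; lia). apply IH.
    + intros t Ht. apply S3_E; auto.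
    + rewrite pow_m1_abs; lra.
Qed.

Lemma S_after n t : ts n <= t ->
  S3 n t = Lin n t /\ S1 n t = Lin n t - Ssin n t /\ S2 n t = (-1) ^ n - Scos n t.
Proof.
  induction n as [|n IH]; intros Ht; simpl.
  - rewrite ts0 in Ht. rewrite ramp_pos, Rr_pos, Rp_pos by lra. repeat split; ring.
  - assert (ts n <= ts (S n)) by apply tsS.
    destruct (IH ltac:(lra)) as [A [B C]]. rewrite A, B, C.
    rewrite ramp_pos, Rr_pos, Rp_pos by lra. repeat split; ring.
Qed.

Lemma S3_J N i t : (i <= N)%nat -> ts i <= t <= ts (S i) ->
  S3 N t = S3 N (ts i) + (-1) ^ i * (t - ts i).
Proof.
  intros HiN Ht. assert (ts i <= ts (S i)) by apply tsS.
  rewrite (S3_Z N i t), (S3_Z N i (ts i)) by (auto; lra).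
  apply S3_E. lra.
Qed.
End Sup.


Section Tau.
Variable rho : nat.
Variable g : R.
Hypothesis Hrho : (1 <= rho)%nat.
Let r := INR rho.
Lemma r_ge1 : 1 <= r.
Proof. unfold r. replace 1 with (INR 1) by reflexivity. apply le_INR; auto. Qed.

Definition ftau (t : R) := tau_even rho g t - 2 * atan (sin t / (2 * INR rho - cos t)).
Definition ftau' (t : R) := 2 / (2 * INR rho - 1) - 2 * (2 * INR rho * cos t - 1) / (4 * INR rho ^ 2 - 4 * INR rho * cos t + 1).

Lemma den_pos t : 0 < 2 * INR rho - cos t.
Proof. assert (H := r_ge1). unfold r in H. assert (H2 := COS_bound t). lra. Qed.

Lemma ftau_deriv t : derivable_pt_lim ftau t (ftau' t).
Proof.
  assert (H := r_ge1). unfold r in H. assert (Hd := den_pos t).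
  assert (Hsc := sin2_cos2 t). unfold Rsqr in Hsc.
  apply is_derive_Reals. unfold ftau, ftau', tau_even. auto_derive.
  { lra. }
  assert (HN : 0 < 4 * INR rho ^ 2 - 4 * INR rho * cos t + 1).
  { assert (H2 := COS_bound t). nra. }
  assert (Hs2 : sin t ^ 2 = 1 - cos t ^ 2) by nra.
  field_simplify_eq; try lra. rewrite Hs2. ring.
Qed.

Lemma ftau'_pos t : 0 < t < PI -> 0 < ftau' t.
Proof.
  intros Ht. assert (H := r_ge1). unfold r in H.
  assert (Hc : cos t < 1) by (rewrite <- cos_0; apply cos_decreasing_1; lra).
  assert (Hc2 := COS_bound t).
  assert (HN : 0 < 4 * INR rho ^ 2 - 4 * INR rho * cos t + 1) by nra.
  unfold ftau'.
  set (N := 4 * INR rho ^ 2 - 4 * INR rho * cos t + 1) in *.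
  assert (E : 2 / (2 * INR rho - 1) - 2 * (2 * INR rho * cos t - 1) / N =
     2 * ((4 * INR rho ^ 2 + 2 * INR rho) * (1 - cos t)) / ((2 * INR rho - 1) * N)).
  { unfold N in *. field. repeat split; lra. }
  rewrite E. apply Rdiv_lt_0_compat; [|apply Rmult_lt_0_compat; lra].
  assert (0 < INR rho ^ 2) by (apply pow_lt; lra).
  assert (0 < 4 * INR rho ^ 2 + 2 * INR rho) by lra.
  apply Rmult_lt_0_compat; [lra| apply Rmult_lt_0_compat; lra].
Qed.

Lemma tau_eq_iff t : tau_eq rho g t <-> ftau t = 0.
Proof. unfold tau_eq, ftau. split; intros; lra. Qed.

Lemma tau_exists : 2 * (INR rho - 1) * PI < g < 2 * INR rho * PI ->
  exists tau : R, (0 < tau < PI /\ tau_eq rho g tau /\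
     (forall tau', 0 < tau' < PI -> tau_eq rho g tau' -> tau' = tau)).
Proof.
  intros Hg. assert (H := r_ge1). unfold r in H.
  assert (Hcont : continuity ftau).
  { intros x. apply derivable_continuous_pt. exists (ftau' x). apply ftau_deriv. }
  assert (Hf0 : ftau 0 < 0).
  { unfold ftau, tau_even. rewrite sin_0. unfold Rdiv at 2. rewrite Rmult_0_l, atan_0.
    assert ((2 * 0 + 2 * (INR rho - 1) * PI - g) / (2 * INR rho - 1) < 0); [|lra].
    apply Rdiv_neg_pos; lra. }
  assert (HfP : 0 < ftau PI).
  { unfold ftau, tau_even. rewrite sin_PI. unfold Rdiv at 2. rewrite Rmult_0_l, atan_0.
    assert (0 < (2 * PI + 2 * (INR rho - 1) * PI - g) / (2 * INR rho - 1)); [|lra].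
    apply Rdiv_lt_0_compat; lra. }
  destruct (IVT ftau 0 PI Hcont PI_RGT_0 Hf0 HfP) as [z [Hz Hfz]].
  assert (Hz0 : z <> 0) by (intro E; subst; lra).
  assert (HzP : z <> PI) by (intro E; subst; lra).
  exists z. split; [lra|]. split; [apply tau_eq_iff; auto|].
  intros t' Ht' Heq'. apply tau_eq_iff in Heq'.
  destruct (Rtotal_order t' z) as [Hl|[Hl|Hl]]; auto; exfalso.
  - destruct (MVT_cor2 ftau ftau' t' z Hl) as [c [Hc Hcin]].
    { intros; apply ftau_deriv. }
    assert (0 < ftau' c) by (apply ftau'_pos; lra).
    rewrite Hfz, Heq' in Hc. nra.
  - destruct (MVT_cor2 ftau ftau' z t' Hl) as [c [Hc Hcin]].
    { intros; apply ftau_deriv. }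
    assert (0 < ftau' c) by (apply ftau'_pos; lra).
    rewrite Hfz, Heq' in Hc. nra.
Qed.
End Tau.



Section Data.
Variable rho : nat.
Variable g tau : R.
Hypothesis Hrho : (1 <= rho)%nat.
Hypothesis Hg : 2 * (INR rho - 1) * PI < g < 2 * INR rho * PI.
Hypothesis Htau : 0 < tau < PI.
Hypothesis Heq : tau_eq rho g tau.

Lemma rge1 : 1 <= INR rho.
Proof. replace 1 with (INR 1) by reflexivity. apply le_INR; auto. Qed.

Definition xx := sin tau / (2 * INR rho - cos tau).
Definition te := tau_even rho g tau.
Definition tod := tau_odd rho g tau.

Lemma xx_pos : 0 < xx.
Proof.
  unfold xx. assert (H := rge1). assert (Hc := COS_bound tau).
  apply Rdiv_lt_0_compat; [apply sin_gt_0; lra| lra].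
Qed.

Lemma te_atan : te = 2 * atan xx.
Proof. exact Heq. Qed.

Lemma te_bounds : 0 < te < PI.
Proof.
  rewrite te_atan. assert (H := xx_pos).
  assert (A := atan_increasing 0 xx H). rewrite atan_0 in A.
  assert (B := atan_bound xx). lra.
Qed.

Lemma tod_eq : tod = 2 * PI - te.
Proof. unfold tod, te, tau_odd, tau_even. assert (H := rge1). field. lra. Qed.

Lemma tauj_pos j : 0 < tauj rho g tau j.
Proof.
  assert (H := te_bounds). assert (H2 := tod_eq). fold te tod.
  unfold tauj. destruct (orb _ _); [lra|]. destruct (Nat.even j); fold te tod; lra.
Qed.

Lemma tsw0 : tsw rho g tau 0 = 0.
Proof. reflexivity. Qed.
Lemma tswS k : tsw rho g tau k < tsw rho g tau (S k).
Proof. simpl. assert (H := tauj_pos (S k)). lra. Qed.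

Lemma tsw_S k : tsw rho g tau (S k) = tsw rho g tau k + tauj rho g tau (S k).
Proof. reflexivity. Qed.

Lemma tauj_1 : tauj rho g tau 1 = tau.
Proof. reflexivity. Qed.
Lemma tauj_last : tauj rho g tau (2 * rho + 1) = tau.
Proof. unfold tauj. rewrite (Nat.eqb_refl (2*rho+1)), Bool.orb_true_r. reflexivity. Qed.
Lemma tauj_ev k : (k < rho)%nat -> tauj rho g tau (2 * k + 2) = te.
Proof.
  intros Hk. unfold tauj.
  rewrite (proj2 (Nat.eqb_neq (2*k+2) 1)) by lia.
  rewrite (proj2 (Nat.eqb_neq (2*k+2) (2*rho+1))) by lia. simpl orb.
  replace (2 * k + 2)%nat with (2 * (k+1))%nat by lia. rewrite Nat.even_even. reflexivity.
Qed.
Lemma tauj_od k : (1 <= k)%nat -> (k < rho)%nat -> tauj rho g tau (2 * k + 1) = tod.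
Proof.
  intros Hk1 Hk. unfold tauj.
  rewrite (proj2 (Nat.eqb_neq (2*k+1) 1)) by lia.
  rewrite (proj2 (Nat.eqb_neq (2*k+1) (2*rho+1))) by lia. simpl orb.
  rewrite Nat.even_odd. reflexivity.
Qed.

Lemma tsw_closed k : (k < rho)%nat ->
  tsw rho g tau (2 * k + 1) = tau + 2 * INR k * PI /\
  tsw rho g tau (2 * k + 2) = tau + te + 2 * INR k * PI.
Proof.
  induction k as [|k IH]; intros Hk.
  - replace (2*0+1)%nat with 1%nat by lia. replace (2*0+2)%nat with 2%nat by lia.
    cbn [tsw]. rewrite tauj_1.
    assert (E : tauj rho g tau 2 = te) by (apply (tauj_ev 0); lia). rewrite E.
    simpl INR. split; ring.
  - destruct (IH ltac:(lia)) as [A B].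
    replace (2 * S k + 1)%nat with (S (2 * k + 2)) by lia.
    replace (2 * S k + 2)%nat with (S (S (2 * k + 2))) by lia.
    rewrite !tsw_S, B.
    replace (S (S (2 * k + 2))) with (2 * (S k) + 2)%nat by lia.
    replace (S (2 * k + 2)) with (2 * (S k) + 1)%nat by lia.
    rewrite tauj_od by lia. rewrite tauj_ev by lia. rewrite tod_eq, S_INR.
    split; ring.
Qed.

Definition Tm := (4 * INR rho * (tau + (INR rho - 1) * PI) - g) / (2 * INR rho - 1).

Lemma Tm_eq : Tm = 2 * tau + te + 2 * (INR rho - 1) * PI.
Proof. unfold Tm, te, tau_even. assert (H := rge1). field. lra. Qed.

Lemma tsw_2rho : tsw rho g tau (2 * rho) = tau + te + 2 * (INR rho - 1) * PI.
Proof.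
  destruct (tsw_closed (rho - 1) ltac:(lia)) as [_ B].
  replace (2 * (rho - 1) + 2)%nat with (2 * rho)%nat in B by lia.
  rewrite B, minus_INR by lia. simpl INR. ring.
Qed.

Lemma tsw_last : tsw rho g tau (2 * rho + 1) = Tm.
Proof.
  replace (2 * rho + 1)%nat with (S (2 * rho)) by lia. rewrite tsw_S.
  replace (S (2 * rho)) with (2 * rho + 1)%nat by lia.
  rewrite tauj_last, tsw_2rho, Tm_eq. ring.
Qed.


Lemma cs_te : cos te = ((2 * INR rho - cos tau)^2 - sin tau ^ 2) / ((2 * INR rho - cos tau)^2 + sin tau ^ 2)
  /\ sin te = 2 * sin tau * (2 * INR rho - cos tau) / ((2 * INR rho - cos tau)^2 + sin tau ^ 2).
Proof.
  assert (H := rge1). assert (Hc := COS_bound tau). assert (Hs : 0 < sin tau) by (apply sin_gt_0; lra).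
  assert (HD : 0 < 2 * INR rho - cos tau) by lra.
  rewrite te_atan. rewrite cos_2a_cos, sin_2a, cos_atan, sin_atan.
  assert (Hq : 0 < 1 + xx²) by (unfold Rsqr; nra).
  assert (Hsq : sqrt (1 + xx²) * sqrt (1 + xx²) = 1 + xx²) by (apply sqrt_sqrt; lra).
  assert (Hsp : 0 < sqrt (1 + xx²)) by (apply sqrt_lt_R0; lra).
  split.
  - replace (2 * (1 / sqrt (1 + xx²)) * (1 / sqrt (1 + xx²)) - 1) with
       (2 / (sqrt (1 + xx²) * sqrt (1 + xx²)) - 1) by (field; lra).
    rewrite Hsq. unfold xx, Rsqr. field. split; nra.
  - replace (2 * (xx / sqrt (1 + xx²)) * (1 / sqrt (1 + xx²))) with
       (2 * xx / (sqrt (1 + xx²) * sqrt (1 + xx²))) by (field; lra).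
    rewrite Hsq. unfold xx, Rsqr. field. split; nra.
Qed.

Lemma id_trig : sin (2 * tau + te) + INR rho * (-2 * sin (tau + te) + 2 * sin tau) = 0 /\
                cos (2 * tau + te) + INR rho * (-2 * cos (tau + te) + 2 * cos tau) = 1.
Proof.
  assert (H := rge1). assert (Hc := COS_bound tau). assert (Hs : 0 < sin tau) by (apply sin_gt_0; lra).
  assert (HD : 0 < 2 * INR rho - cos tau) by lra.
  assert (Hsc := sin2_cos2 tau). unfold Rsqr in Hsc.
  assert (Hs2 : sin tau ^ 2 = 1 - cos tau ^ 2) by nra.
  assert (Hs3 : sin tau ^ 3 = sin tau * (1 - cos tau ^ 2)) by nra.
  assert (Hs4 : sin tau ^ 4 = (1 - cos tau ^ 2)^2) by nra.
  assert (HN : 0 < (2 * INR rho - cos tau)^2 + sin tau ^ 2) by nra.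
  destruct cs_te as [C S].
  rewrite !sin_plus, !cos_plus. replace (2 * tau) with (tau + tau) by ring.
  rewrite !sin_plus, !cos_plus, C, S.
  split; field_simplify_eq; try lra; rewrite ?Hs4, ?Hs3, ?Hs2; ring.
Qed.

Definition th := tau + te / 2.
Definition sig (t : R) := cos (te / 2) - cos (t - th).

Lemma icases i : (i <= 2 * rho)%nat ->
  i = 0%nat \/ (exists k, (k < rho)%nat /\ i = (2 * k + 1)%nat) \/
  (exists k, (k + 1 < rho)%nat /\ i = (2 * k + 2)%nat) \/ i = (2 * rho)%nat.
Proof.
  intros Hi. destruct (Nat.Even_or_Odd i) as [[m Hm]|[m Hm]].
  - destruct m as [|m]; [left; lia|].
    destruct (Nat.eq_dec (S m) rho) as [E|E]; [right; right; right; lia|].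
    right; right; left. exists m. lia.
  - right; left. exists m. lia.
Qed.

Lemma sig_sign i : (i <= 2 * rho)%nat ->
  (forall t, tsw rho g tau i <= t <= tsw rho g tau (S i) -> 0 <= (-1) ^ i * sig t) /\
  (forall t, tsw rho g tau i < t < tsw rho g tau (S i) -> 0 < (-1) ^ i * sig t).
Proof.
  intros Hi. assert (Hte := te_bounds). assert (H1 := rge1).
  assert (Ha : 0 < te / 2 < PI) by lra.
  unfold sig, th.
  destruct (icases i Hi) as [E|[[k [Hk E]]|[[k [Hk E]]|E]]]; subst i.
  - rewrite tsw_S, tsw0, tauj_1. rewrite pow_O, Rplus_0_l.
    split; intros t Ht.
    + replace (t - (tau + te / 2)) with (- (tau + te / 2 - t)) by ring. rewrite cos_neg.
      assert (cos (tau + te / 2 - t) <= cos (te / 2)) by (apply cosA; lra). lra.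
    + replace (t - (tau + te / 2)) with (- (tau + te / 2 - t)) by ring. rewrite cos_neg.
      assert (cos (tau + te / 2 - t) < cos (te / 2)) by (apply cosA'; lra). lra.
  - destruct (tsw_closed k Hk) as [A B].
    replace (S (2 * k + 1)) with (2 * k + 2)%nat by lia. rewrite A, B.
    replace ((-1) ^ (2 * k + 1)) with (-1) by (replace (2*k+1)%nat with (S (2*k)) by lia; rewrite pow_1_odd; ring).
    assert (Hk0 : 0 <= INR k) by apply pos_INR.
    split; intros t Ht; rewrite <- (cos_per_sub (t - (tau + te / 2)) k).
    + assert (cos (te / 2) <= cos (t - (tau + te / 2) - 2 * INR k * PI)); [|lra].
      apply cosB; auto. apply Rabs_le. lra.
    + assert (cos (te / 2) < cos (t - (tau + te / 2) - 2 * INR k * PI)); [|lra].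
      apply cosB'; auto. apply Rabs_def1; lra.
  - destruct (tsw_closed k ltac:(lia)) as [A B].
    destruct (tsw_closed (S k) ltac:(lia)) as [A' B'].
    replace (S (2 * k + 2)) with (2 * S k + 1)%nat by lia. rewrite A', B. rewrite S_INR in *.
    replace ((-1) ^ (2 * k + 2)) with 1 by (replace (2*k+2)%nat with (2*(S k))%nat by lia; rewrite pow_1_even; ring).

    split; intros t Ht; rewrite <- (cos_per_sub (t - (tau + te / 2)) k).
    + assert (cos (t - (tau + te / 2) - 2 * INR k * PI) <= cos (te / 2)) by (apply cosA; lra). lra.
    + assert (cos (t - (tau + te / 2) - 2 * INR k * PI) < cos (te / 2)) by (apply cosA'; lra). lra.
  - rewrite tsw_2rho. replace (S (2 * rho)) with (2 * rho + 1)%nat by lia. rewrite tsw_last, Tm_eq.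
    rewrite pow_1_even.
    assert (Hr : INR (rho - 1) = INR rho - 1) by (rewrite minus_INR by lia; reflexivity).
    split; intros t Ht; rewrite <- (cos_per_sub (t - (tau + te / 2)) (rho - 1)); rewrite Hr.
    + assert (cos (t - (tau + te / 2) - 2 * (INR rho - 1) * PI) <= cos (te / 2)) by (apply cosA; lra). lra.
    + assert (cos (t - (tau + te / 2) - 2 * (INR rho - 1) * PI) < cos (te / 2)) by (apply cosA'; lra). lra.
Qed.

Definition ts := tsw rho g tau.
Lemma ts0' : ts 0 = 0.
Proof. reflexivity. Qed.
Lemma tsS' k : ts k <= ts (S k).
Proof. left. apply tswS. Qed.

Definition X1 := S1 ts (2 * rho).
Definition X2 := S2 ts (2 * rho).
Definition X3 := S3 ts (2 * rho).

Lemma X3_J i t : (i <= 2 * rho)%nat -> ts i <= t <= ts (S i) ->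
  X3 t = X3 (ts i) + (-1) ^ i * (t - ts i).
Proof. intros; apply S3_J; auto. apply tsS'. Qed.

Lemma X_traj : traj X1 X2 X3.
Proof.
  destruct (S_zero ts ts0' tsS' (2 * rho)) as [A [B C]].
  unfold traj, X1, X2, X3. repeat split; auto.
  - intros; apply S3_lip; [apply ts0'|apply tsS'].
  - intros; apply S1_deriv.
  - intros; apply S2_deriv.
Qed.

Lemma pm1 i : (-1) ^ i = 1 \/ (-1) ^ i = -1.
Proof. induction i; simpl; [left; reflexivity| destruct IHi as [E|E]; rewrite E; [right|left]; ring]. Qed.

Lemma sums_closed T m : (m <= rho)%nat ->
  Lin ts (2 * m) T = T - 2 * INR m * te /\
  Ssin ts (2 * m) T = sin T + INR m * (-2 * sin (T - tau) + 2 * sin (T - tau - te)) /\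
  Scos ts (2 * m) T = cos T + INR m * (-2 * cos (T - tau) + 2 * cos (T - tau - te)).
Proof.
  induction m as [|m IH]; intros Hm.
  - simpl. repeat split; ring.
  - destruct (IH ltac:(lia)) as [A [B C]].
    destruct (tsw_closed m ltac:(lia)) as [E1 E2]. fold ts in E1, E2.
    replace (2 * S m)%nat with (S (S (2 * m))) by lia.
    cbn [Lin Ssin Scos]. rewrite A, B, C.
    replace (S (S (2 * m))) with (2 * m + 2)%nat by lia.
    replace (S (2 * m)) with (2 * m + 1)%nat by lia.
    rewrite E1, E2.
    replace ((-1) ^ (2 * m + 2)) with 1 by (replace (2*m+2)%nat with (2*(S m))%nat by lia; rewrite pow_1_even; ring).
    replace ((-1) ^ (2 * m + 1)) with (-1) by (replace (2*m+1)%nat with (S (2*m)) by lia; rewrite pow_1_odd; ring).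
    replace (T - (tau + 2 * INR m * PI)) with ((T - tau) - 2 * INR m * PI) by ring.
    replace (T - (tau + te + 2 * INR m * PI)) with ((T - tau - te) - 2 * INR m * PI) by ring.
    rewrite sin_per_sub, cos_per_sub, sin_per_sub, cos_per_sub, S_INR.
    repeat split; ring.
Qed.

Lemma Tm_pos : 0 < Tm.
Proof.
  rewrite <- tsw_last. apply Rle_lt_trans with (ts (2 * rho)).
  - rewrite <- ts0'. apply ts_mono; [apply tsS'|lia].
  - replace (2 * rho + 1)%nat with (S (2 * rho)) by lia. apply tswS.
Qed.

Lemma X_reach : reaches g Tm X1 X2 X3.
Proof.
  assert (Hr := rge1). assert (Hle : ts (2 * rho) <= Tm).
  { rewrite <- tsw_last. replace (2 * rho + 1)%nat with (S (2 * rho)) by lia. apply tsS'. }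
  destruct (S_after ts ts0' tsS' (2 * rho) Tm Hle) as [A [B C]].
  destruct (sums_closed Tm rho (le_n _)) as [L [Ss Sc]].
  destruct id_trig as [I1 I2].
  assert (Hrm : INR (rho - 1) = INR rho - 1) by (rewrite minus_INR by lia; reflexivity).
  assert (E1 : Tm - tau = (tau + te) + 2 * INR (rho - 1) * PI) by (rewrite Hrm, Tm_eq; ring).
  assert (E2 : Tm - tau - te = tau + 2 * INR (rho - 1) * PI) by (rewrite Hrm, Tm_eq; ring).
  assert (E3 : Tm = (2 * tau + te) + 2 * INR (rho - 1) * PI) by (rewrite Hrm, Tm_eq; ring).
  rewrite E2, E1 in Ss, Sc. rewrite !sin_period in Ss. rewrite !cos_period in Sc.
  assert (Hsin : sin Tm = sin (2 * tau + te)) by (rewrite E3; apply sin_period).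
  assert (Hcos : cos Tm = cos (2 * tau + te)) by (rewrite E3; apply cos_period).
  rewrite Hsin in Ss. rewrite Hcos in Sc.
  assert (HL : Tm - 2 * INR rho * te = g).
  { rewrite Tm_eq. unfold te, tau_even. field. lra. }
  unfold reaches, X1, X2, X3. split; [left; apply Tm_pos|].
  rewrite A, B, C, L, Ss, Sc, pow_1_even. repeat split; lra.
Qed.

Lemma X_control i : (i <= 2 * rho)%nat ->
  control_on X3 (ts i) (ts (S i)) ((-1) ^ i).
Proof.
  intros Hi t0 Ht0.
  apply deriv_lin with (d := Rmin (t0 - ts i) (ts (S i) - t0)).
  { apply Rmin_pos; lra. }
  intros t Ht. apply Rabs_def2 in Ht.
  assert (H1 := Rmin_l (t0 - ts i) (ts (S i) - t0)).
  assert (H2 := Rmin_r (t0 - ts i) (ts (S i) - t0)).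
  rewrite (X3_J i t), (X3_J i t0) by (auto; lra). ring.
Qed.

Definition W (x1 x2 x3 : R -> R) (d k0 t : R) : R :=
  cos (t - th) * (x1 (t - d) - X1 t) - sin (t - th) * (x2 (t - d) - X2 t) +
  (k0 - cos (t - th)) * (x3 (t - d) - X3 t).

Lemma deriv_eq f x l l' : derivable_pt_lim f x l -> l = l' -> derivable_pt_lim f x l'.
Proof. intros H E; subst; auto. Qed.

Lemma Rabs_sub_le a b : Rabs (a - b) <= Rabs a + Rabs b.
Proof. unfold Rminus. eapply Rle_trans; [apply Rabs_triang|]. rewrite Rabs_Ropp. lra. Qed.

Lemma W_int x1 x2 x3 d i a b m : traj x1 x2 x3 -> (i <= 2 * rho)%nat ->
  ts i <= a -> a <= b -> b <= ts (S i) -> 0 <= m ->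
  (forall t, a <= t <= b -> m <= (-1) ^ i * sig t) ->
  W x1 x2 x3 d (cos (te / 2) - m * (-1) ^ i) b <= W x1 x2 x3 d (cos (te / 2) - m * (-1) ^ i) a.
Proof.
  intros [Z1 [Z2 [Z3 [Lp [D1 D2]]]]] Hi Ha Hab Hb Hm Hsg.
  unfold W.
  apply (GM (fun t => cos (t - th) * (x1 (t - d) - X1 t) - sin (t - th) * (x2 (t - d) - X2 t))
            (fun t => (cos (te / 2) - m * (-1) ^ i) - cos (t - th))
            (fun t => - sin (t - th))
            (fun t => x3 (t - d) - X3 t) a b 1 2); try lra.
  - intros t _.
    assert (Hc : derivable_pt_lim (fun t => cos (t - th)) t (- sin (t - th)))
      by (apply deriv_shift; apply derivable_pt_lim_cos).
    assert (Hs : derivable_pt_lim (fun t => sin (t - th)) t (cos (t - th)))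
      by (apply deriv_shift; apply derivable_pt_lim_sin).
    assert (Hy1 : derivable_pt_lim (fun t => x1 (t - d) - X1 t) t (x2 (t - d) - X2 t)).
    { apply derivable_pt_lim_minus. apply deriv_shift; apply D1. apply S1_deriv. }
    assert (Hy2 : derivable_pt_lim (fun t => x2 (t - d) - X2 t) t
                   ((- x1 (t - d) + x3 (t - d)) - (- X1 t + X3 t))).
    { apply derivable_pt_lim_minus. apply deriv_shift; apply D2. apply S2_deriv. }
    eapply deriv_eq.
    + apply derivable_pt_lim_minus; apply derivable_pt_lim_mult; eauto.
    + cbv beta. ring.
  - intros t _. eapply deriv_eq.
    + apply derivable_pt_lim_minus; [apply derivable_pt_lim_const|].
      apply deriv_shift; apply derivable_pt_lim_cos.
    + ring.
  - intros t _. rewrite Rabs_Ropp. apply Rabs_le. apply SIN_bound.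
  - intros t t' _ _.
    replace (x3 (t' - d) - X3 t' - (x3 (t - d) - X3 t)) with
      ((x3 (t' - d) - x3 (t - d)) - (X3 t' - X3 t)) by ring.
    eapply Rle_trans; [apply Rabs_sub_le|].
    assert (A := Lp (t - d) (t' - d)). replace (t' - d - (t - d)) with (t' - t) in A by ring.
    assert (B := S3_lip ts ts0' tsS' (2 * rho) t t'). fold X3 in B. lra.
  - intros t h Ht Hh Hth.
    assert (E1 := X3_J i t Hi ltac:(lra)). assert (E2 := X3_J i (t + h) Hi ltac:(lra)).
    assert (A := Lp (t - d) (t + h - d)). replace (t + h - d - (t - d)) with h in A by ring.
    rewrite (Rabs_right h) in A by lra. apply Rabs_le_between in A.
    assert (S := Hsg t ltac:(lra)). unfold sig in S.
    replace (x3 (t + h - d) - X3 (t + h) - (x3 (t - d) - X3 t)) with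
       ((x3 (t + h - d) - x3 (t - d)) - (-1) ^ i * h) by (rewrite E1, E2; ring).
    destruct (pm1 i) as [U|U]; rewrite U in *.
    + assert (P1 : 0 <= cos (te / 2) - m * 1 - cos (t - th)) by lra.
      assert (P2 : x3 (t + h - d) - x3 (t - d) - 1 * h <= 0) by lra. nra.
    + assert (P1 : cos (te / 2) - m * -1 - cos (t - th) <= 0) by lra.
      assert (P2 : 0 <= x3 (t + h - d) - x3 (t - d) - -1 * h) by lra. nra.
Qed.

Lemma chain (F : R -> R) N :
  (forall i, (i <= N)%nat -> forall a b, ts i <= a -> a <= b -> b <= ts (S i) -> F b <= F a) ->
  forall a b, 0 <= a -> a <= b -> b <= ts (S N) -> F b <= F a.
Proof.
  induction N as [|N IH]; intros H a b Ha Hab Hb.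
  - assert (E0 : ts 0%nat = 0) by reflexivity. apply (H 0%nat); auto; lra.
  - destruct (Rle_or_lt b (ts (S N))) as [H1|H1].
    + apply IH; auto. intros i Hi; apply H; lia.
    + destruct (Rle_or_lt (ts (S N)) a) as [H2|H2].
      * apply (H (S N) (le_n _) a b); lra.
      * apply Rle_trans with (F (ts (S N))).
        -- apply (H (S N) (le_n _) (ts (S N)) b); lra.
        -- apply IH; try lra. intros i Hi; apply H; lia.
Qed.

Definition kap := cos (te / 2).

Lemma tsS_last : ts (S (2 * rho)) = Tm.
Proof. replace (S (2 * rho)) with (2 * rho + 1)%nat by lia. apply tsw_last. Qed.

Lemma W_mono x1 x2 x3 d : traj x1 x2 x3 ->
  forall a b, 0 <= a -> a <= b -> b <= Tm -> W x1 x2 x3 d kap b <= W x1 x2 x3 d kap a.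
Proof.
  intros Ht a b Ha Hab Hb. rewrite <- tsS_last in Hb.
  apply (chain (W x1 x2 x3 d kap) (2 * rho)); auto.
  intros i Hi a' b' H1 H2 H3.
  unfold kap. replace (cos (te / 2)) with (cos (te / 2) - 0 * (-1) ^ i) by ring.
  apply W_int; auto; try lra.
  intros t Htt. apply (proj1 (sig_sign i Hi)). fold ts. lra.
Qed.

Lemma W_shift x1 x2 x3 d k0 c t :
  W x1 x2 x3 d (k0 - c) t = W x1 x2 x3 d k0 t - c * (x3 (t - d) - X3 t).
Proof. unfold W. ring. Qed.

Lemma LL x1 x2 x3 d i t0 : traj x1 x2 x3 -> (i <= 2 * rho)%nat -> ts i < t0 < ts (S i) ->
  exists dl m, 0 < dl /\ 0 < m /\ ts i <= t0 - dl /\ t0 + dl <= ts (S i) /\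
   forall a b, t0 - dl <= a -> a <= b -> b <= t0 + dl ->
     W x1 x2 x3 d (kap - m * (-1) ^ i) b <= W x1 x2 x3 d (kap - m * (-1) ^ i) a.
Proof.
  intros Ht Hi Ht0.
  assert (Hs := proj2 (sig_sign i Hi) t0 Ht0).
  set (m := (-1) ^ i * sig t0 / 2).
  set (dl := Rmin m (Rmin (t0 - ts i) (ts (S i) - t0)) / 2).
  assert (Hm : 0 < m) by (unfold m; lra).
  assert (M1 := Rmin_l m (Rmin (t0 - ts i) (ts (S i) - t0))).
  assert (M2 := Rmin_r m (Rmin (t0 - ts i) (ts (S i) - t0))).
  assert (M3 := Rmin_l (t0 - ts i) (ts (S i) - t0)).
  assert (M4 := Rmin_r (t0 - ts i) (ts (S i) - t0)).
  assert (Hdl : 0 < dl).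
  { unfold dl. assert (0 < Rmin m (Rmin (t0 - ts i) (ts (S i) - t0))); [|lra].
    apply Rmin_pos; auto. apply Rmin_pos; lra. }
  exists dl, m. repeat split; auto; try (unfold dl; lra).
  intros a b Ha Hab Hb.
  apply W_int; auto; try (unfold dl in *; lra).
  intros t Htt.
  assert (C := cos_lip (t0 - th) (t - th)).
  replace (t0 - th - (t - th)) with (t0 - t) in C by ring.
  assert (Hd : Rabs (t0 - t) <= dl) by (apply Rabs_le; lra).
  apply Rabs_le_between in C.
  unfold dl in *. unfold m in *. unfold sig in *.
  destruct (pm1 i) as [U|U]; rewrite U in *; lra.
Qed.

Lemma zero_traj : traj (fun _ => 0) (fun _ => 0) (fun _ => 0).
Proof.
  unfold traj. repeat split; auto.
  - intros. rewrite Rminus_diag, Rabs_R0. apply Rabs_pos.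
  - intros. apply derivable_pt_lim_const.
  - intros. eapply deriv_eq; [apply derivable_pt_lim_const| ring].
Qed.

Lemma X0 : X1 0 = 0 /\ X2 0 = 0 /\ X3 0 = 0.
Proof. apply (S_zero ts ts0' tsS'). Qed.

Lemma minimal T x1 x2 x3 : traj x1 x2 x3 -> reaches g T x1 x2 x3 -> Tm <= T.
Proof.
  intros Htr Hre. destruct (Rle_or_lt Tm T) as [H|H]; auto. exfalso.
  destruct Hre as [HT [R1 [R2 R3]]].
  pose proof Htr as [Z1 [Z2 [Z3 _]]].
  set (d := Tm - T).
  assert (Hd : 0 < d <= Tm) by (unfold d; lra).
  destruct X_reach as [_ [XR1 [XR2 XR3]]].
  assert (W1 : W x1 x2 x3 d kap Tm = 0).
  { unfold W. replace (Tm - d) with T by (unfold d; ring). rewrite R1, R2, R3, XR1, XR2, XR3. ring. }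
  assert (W2 : W x1 x2 x3 d kap d = W (fun _ => 0) (fun _ => 0) (fun _ => 0) 0 kap d).
  { unfold W. replace (d - d) with 0 by ring. rewrite Z1, Z2, Z3. ring. }
  assert (Wx := W_mono x1 x2 x3 d Htr d Tm ltac:(lra) ltac:(lra) ltac:(lra)).
  rewrite W1, W2 in Wx.
  set (Wz := W (fun _ => 0) (fun _ => 0) (fun _ => 0) 0 kap) in *.
  assert (Hz0 : Wz 0 = 0).
  { unfold Wz, W. destruct X0 as [A [B C]]. rewrite A, B, C. ring. }
  assert (Ht1 : ts 1 = tau) by (unfold ts; rewrite tsw_S, tsw0, tauj_1; ring).
  set (t0 := Rmin d tau / 2).
  assert (Mi1 := Rmin_l d tau). assert (Mi2 := Rmin_r d tau).
  assert (Ht0 : 0 < t0) by (unfold t0; assert (0 < Rmin d tau) by (apply Rmin_pos; lra); lra).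
  destruct (LL _ _ _ 0 0 t0 zero_traj ltac:(lia) ltac:(rewrite ts0', Ht1; unfold t0 in *; lra))
    as [dl [m [Hdl [Hm [_ [_ Hw]]]]]].
  set (dl' := Rmin dl (t0 / 2)).
  assert (D1 := Rmin_l dl (t0 / 2)). assert (D2 := Rmin_r dl (t0 / 2)).
  assert (Hdl' : 0 < dl') by (apply Rmin_pos; lra).
  set (a := t0 - dl'). set (b := t0 + dl').
  assert (B1 : t0 - dl <= a) by (unfold a, b, dl', t0 in *; lra).
  assert (B2 : a < b) by (unfold a, b, dl', t0 in *; lra).
  assert (B3 : b <= t0 + dl) by (unfold a, b, dl', t0 in *; lra).
  assert (B4 : 0 <= a) by (unfold a, b, dl', t0 in *; lra).
  assert (B5 : b <= d) by (unfold a, b, dl', t0 in *; lra).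
  assert (B6 : b <= tau) by (unfold a, b, dl', t0 in *; lra).
  clearbody a b.
  assert (Hab := Hw a b B1 ltac:(lra) B3).
  rewrite pow_O, Rmult_1_r, !W_shift in Hab. fold Wz in Hab.
  assert (E := X3_J 0 b ltac:(lia)).
  assert (E' := X3_J 0 a ltac:(lia)).
  rewrite ts0', Ht1, pow_O in E, E'.
  specialize (E ltac:(lra)). specialize (E' ltac:(lra)).
  replace (b - 0) with b in Hab by ring. replace (a - 0) with a in Hab by ring.
  assert (Hlt : Wz b < Wz a) by (rewrite E, E' in Hab; nra).
  assert (H1 := W_mono _ _ _ 0 zero_traj b d ltac:(lra) ltac:(lra) ltac:(lra)).
  assert (H2 := W_mono _ _ _ 0 zero_traj 0 a ltac:(lra) ltac:(lra) ltac:(lra)).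
  fold Wz in H1, H2. lra.
Qed.

Lemma unique_ctrl x1 x2 x3 : traj x1 x2 x3 -> reaches g Tm x1 x2 x3 ->
  forall i, (i <= 2 * rho)%nat -> control_on x3 (ts i) (ts (S i)) ((-1) ^ i).
Proof.
  intros Htr Hre i Hi t0 Ht0.
  destruct Hre as [HT [R1 [R2 R3]]].
  assert (Htr' := Htr). destruct Htr' as [Z1 [Z2 [Z3 [Lp _]]]].
  destruct X_reach as [_ [XR1 [XR2 XR3]]].
  set (Wx := W x1 x2 x3 0 kap).
  assert (W0 : Wx 0 = 0).
  { unfold Wx, W. destruct X0 as [A [B C]]. replace (0 - 0) with 0 by ring. rewrite A, B, C, Z1, Z2, Z3. ring. }
  assert (WT : Wx Tm = 0).
  { unfold Wx, W. replace (Tm - 0) with Tm by ring. rewrite R1, R2, R3, XR1, XR2, XR3. ring. }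
  assert (Hi0 : 0 <= ts i) by (rewrite <- ts0'; apply ts_mono; [apply tsS'|lia]).
  assert (HiT : ts (S i) <= Tm) by (rewrite <- tsS_last; apply ts_mono; [apply tsS'|lia]).
  assert (Wc : forall t, 0 <= t <= Tm -> Wx t = 0).
  { intros t Ht. assert (A := W_mono x1 x2 x3 0 Htr 0 t ltac:(lra) ltac:(lra) ltac:(lra)).
    assert (B := W_mono x1 x2 x3 0 Htr t Tm ltac:(lra) ltac:(lra) ltac:(lra)).
    fold Wx in A, B. lra. }
  destruct (LL x1 x2 x3 0 i t0 Htr Hi Ht0) as [dl [m [Hdl [Hm [Hl [Hr Hw]]]]]].
  assert (Key : forall a b, t0 - dl <= a -> a <= b -> b <= t0 + dl ->
            x3 b - x3 a = (-1) ^ i * (b - a)).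
  { intros a b Ha Hab Hb.
    assert (H := Hw a b Ha Hab Hb). rewrite !W_shift in H. fold Wx in H.
    rewrite (Wc a), (Wc b) in H by lra.
    replace (a - 0) with a in H by ring. replace (b - 0) with b in H by ring.
    rewrite (X3_J i a), (X3_J i b) in H by (auto; lra).
    assert (L := Lp a b). rewrite (Rabs_right (b - a)) in L by lra. apply Rabs_le_between in L.
    destruct (pm1 i) as [U|U]; rewrite U in *; nra. }
  apply deriv_lin with (d := dl); auto.
  intros t Htt. apply Rabs_def2 in Htt.
  destruct (Rle_or_lt t0 t) as [H|H].
  - rewrite <- (Key t0 t) by lra. ring.
  - assert (K := Key t t0 ltac:(lra) ltac:(lra) ltac:(lra)). lra.
Qed.

Lemma part_i :
  let Tmin := (4 * INR rho * (tau + (INR rho - 1) * PI) - g) / (2 * INR rho - 1) in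
  (forall j : nat, (1 <= j <= 2 * rho + 1)%nat ->
     tsw rho g tau (j - 1) < tsw rho g tau j) /\
  tsw rho g tau (2 * rho + 1) = Tmin /\
  (exists x1 x2 x3 : R -> R,
     traj x1 x2 x3 /\ reaches g Tmin x1 x2 x3 /\
     (forall j : nat, (1 <= j <= 2 * rho + 1)%nat ->
        control_on x3 (tsw rho g tau (j - 1)) (tsw rho g tau j) ((-1) ^ (j - 1)))) /\
  (forall (T : R) (x1 x2 x3 : R -> R),
     traj x1 x2 x3 -> reaches g T x1 x2 x3 -> Tmin <= T) /\
  (forall x1 x2 x3 : R -> R,
     traj x1 x2 x3 -> reaches g Tmin x1 x2 x3 ->
     forall j : nat, (1 <= j <= 2 * rho + 1)%nat ->
       control_on x3 (tsw rho g tau (j - 1)) (tsw rho g tau j) ((-1) ^ (j - 1))).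
Proof.
  intro Tmin. assert (HT : Tmin = Tm) by reflexivity. clearbody Tmin. subst Tmin.
  split; [|split; [|split; [|split]]].
  - intros j Hj. replace j with (S (j - 1)) at 2 by lia. apply tswS.
  - apply tsw_last.
  - exists X1, X2, X3. split; [apply X_traj|]. split; [apply X_reach|].
    intros j Hj. replace j with (S (j - 1)) at 2 by lia. apply (X_control (j - 1)). lia.
  - intros T x1 x2 x3 H1 H2. apply (minimal T x1 x2 x3); auto.
  - intros x1 x2 x3 H1 H2 j Hj. replace j with (S (j - 1)) at 2 by lia.
    apply (unique_ctrl x1 x2 x3 H1 H2 (j - 1)). lia.
Qed.

End Data.

Lemma part_ii (g : R) (rho : nat) : (1 <= rho)%nat -> g = 2 * INR rho * PI ->
     (exists x1 x2 x3 : R -> R,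
        traj x1 x2 x3 /\ reaches g (2 * INR rho * PI) x1 x2 x3 /\
        control_on x3 0 (2 * INR rho * PI) 1) /\
     (forall (T : R) (x1 x2 x3 : R -> R),
        traj x1 x2 x3 -> reaches g T x1 x2 x3 -> 2 * INR rho * PI <= T) /\
     (forall x1 x2 x3 : R -> R,
        traj x1 x2 x3 -> reaches g (2 * INR rho * PI) x1 x2 x3 ->
        control_on x3 0 (2 * INR rho * PI) 1).
Proof.
  intros Hrho Hg.
  assert (Hr : 1 <= INR rho) by (replace 1 with (INR 1) by reflexivity; apply le_INR; auto).
  assert (HP := PI_RGT_0).
  assert (Hpos : 0 < 2 * INR rho * PI) by (apply Rmult_lt_0_compat; lra).
  split; [|split].
  - exists (fun t => t - sin t), (fun t => 1 - cos t), (fun t => t).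
    split; [|split].
    + unfold traj. repeat split.
      * rewrite sin_0; ring.
      * rewrite cos_0; ring.
      * intros; lra.
      * intros t. apply is_derive_Reals. auto_derive; auto. ring.
      * intros t. apply is_derive_Reals. auto_derive; auto. ring.
    + unfold reaches. assert (S0 := sin_period 0 rho). assert (C0 := cos_period 0 rho).
      rewrite Rplus_0_l, sin_0 in S0. rewrite Rplus_0_l, cos_0 in C0.
      cbv beta. repeat split; lra.
    + intros t Ht. apply deriv_lin with (d := 1); [lra|]. intros; ring.
  - intros T x1 x2 x3 [Z1 [_ [Z3 [Lp _]]]] [HT [_ [_ R3]]].
    assert (A := Lp 0 T). rewrite Z3, R3, !Rminus_0_r, Rabs_right in A by lra.
    rewrite Rabs_right in A by lra. lra.
  - intros x1 x2 x3 [Z1 [_ [Z3 [Lp _]]]] [HT [_ [_ R3]]] t0 Ht0.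
    assert (Key : forall t, 0 <= t <= 2 * INR rho * PI -> x3 t = t).
    { intros t Ht. assert (A := Lp 0 t). assert (B := Lp t (2 * INR rho * PI)).
      rewrite Z3, Rminus_0_r, Rminus_0_r in A. rewrite R3 in B.
      rewrite (Rabs_right t) in A by lra. rewrite (Rabs_right (2 * INR rho * PI - t)) in B by lra.
      apply Rabs_le_between in A. apply Rabs_le_between in B. lra. }
    apply deriv_lin with (d := Rmin t0 (2 * INR rho * PI - t0)).
    { apply Rmin_pos; lra. }
    intros t Ht. apply Rabs_def2 in Ht.
    assert (M1 := Rmin_l t0 (2 * INR rho * PI - t0)).
    assert (M2 := Rmin_r t0 (2 * INR rho * PI - t0)).
    rewrite (Key t), (Key t0) by lra. ring.
Qed.

Theorem theorem4 (g : R) (hg : 0 < g) :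
  (* (i) *)
  (forall rho : nat, (1 <= rho)%nat ->
     2 * (INR rho - 1) * PI < g < 2 * INR rho * PI ->
     exists tau : R,
       (0 < tau < PI /\ tau_eq rho g tau /\
        (forall tau' : R, 0 < tau' < PI -> tau_eq rho g tau' -> tau' = tau)) /\
       let Tmin := (4 * INR rho * (tau + (INR rho - 1) * PI) - g) / (2 * INR rho - 1) in
       (* exactly 2 rho switchings: all interval lengths positive *)
       (forall j : nat, (1 <= j <= 2 * rho + 1)%nat ->
          tsw rho g tau (j - 1) < tsw rho g tau j) /\
       tsw rho g tau (2 * rho + 1) = Tmin /\
       (* the bang-bang control is admissible and steers to the target at Tmin *)
       (exists x1 x2 x3 : R -> R,
          traj x1 x2 x3 /\ reaches g Tmin x1 x2 x3 /\
          (forall j : nat, (1 <= j <= 2 * rho + 1)%nat ->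
             control_on x3 (tsw rho g tau (j - 1)) (tsw rho g tau j) ((-1) ^ (j - 1)))) /\
       (* Tmin is the minimum time *)
       (forall (T : R) (x1 x2 x3 : R -> R),
          traj x1 x2 x3 -> reaches g T x1 x2 x3 -> Tmin <= T) /\
       (* uniqueness of the optimal control *)
       (forall x1 x2 x3 : R -> R,
          traj x1 x2 x3 -> reaches g Tmin x1 x2 x3 ->
          forall j : nat, (1 <= j <= 2 * rho + 1)%nat ->
            control_on x3 (tsw rho g tau (j - 1)) (tsw rho g tau j) ((-1) ^ (j - 1)))) /\
  (* (ii) *)
  (forall rho : nat, (1 <= rho)%nat -> g = 2 * INR rho * PI ->
     (exists x1 x2 x3 : R -> R,
        traj x1 x2 x3 /\ reaches g (2 * INR rho * PI) x1 x2 x3 /\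
        control_on x3 0 (2 * INR rho * PI) 1) /\
     (forall (T : R) (x1 x2 x3 : R -> R),
        traj x1 x2 x3 -> reaches g T x1 x2 x3 -> 2 * INR rho * PI <= T) /\
     (forall x1 x2 x3 : R -> R,
        traj x1 x2 x3 -> reaches g (2 * INR rho * PI) x1 x2 x3 ->
        control_on x3 0 (2 * INR rho * PI) 1)).
Proof.
  split.
  - intros rho Hrho Hgb.
    destruct (tau_exists rho g Hrho Hgb) as [tau [Htau [Heq Hu]]].
    exists tau. split; [auto|].
    apply part_i; auto.
  - intros rho Hrho Hgr. apply part_ii; auto.
Qed.
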